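(* Let $n\ge0$ and $\gamma$ a composition of $n$. Then $$\blacktriangle(\kappa_{\mathrm{set}(\gamma)}(\nu))=\sum_{\alpha\odot\beta=\gamma}\kappa_{\mathrm{set}(\alpha)}(\nu)\otimes\kappa_{\mathrm{set}(\beta)}(\nu),$$ the sum over all pairs of compositions $(\alpha,\beta)$ (possibly empty) with $\alpha\odot\beta=\gamma$.
   Context: Fix an integer $\nu>1$; $C_\nu$ is the additive cyclic group of order $\nu$; $[a,b]=\{t\in\mathbb Z:a\le t\le b\}$ (empty if $a>b$), $[n]=[1,n]$; $Q_n(\nu)=\bigoplus_{i\in[n-1]}C_\nu$ (trivial if $n\le1$). For $K\subseteq[n-1]$, $\kappa_K(\nu)$ is the function on $Q_n(\nu)$ equal to $1$ at $\mathbf g$ if $\{i:g_i\ne0\}=K$ and $0$ otherwise (for $n\le1$, $\kappa_\emptyset(\nu)$ is the constant $1$). Compositions: for a composition $\alpha=(\alpha_1,\dots,\alpha_l)$ of $n$, $\mathrm{set}(\alpha)=\{\alpha_1,\alpha_1+\alpha_2,\dots,\alpha_1+\dots+\alpha_{l-1}\}\subseteq[n-1]$, and $\kappa_{\mathrm{set}(\alpha)}(\nu)$ lives on $Q_{|\alpha|}(\nu)$; the empty composition has size $0$ and empty set. Near-concatenation: $(\alpha_1,\dots,\alpha_l)\odot(\beta_1,\dots,\beta_k)=(\alpha_1,\dots,\alpha_l+\beta_1,\beta_2,\dots,\beta_k)$, with $\emptyset\odot\beta=\beta$ and $\alpha\odot\emptyset=\alpha$. Coproduct: for a function $\phi$ on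 $Q_n(\nu)$, $\blacktriangle_0(\phi)=1\otimes\phi$, $\blacktriangle_n(\phi)=\phi\otimes1$, and for $1\le k\le n-1$, $\blacktriangle_k(\phi)\in\mathrm{Fun}(Q_k(\nu))\otimes\mathrm{Fun}(Q_{n-k}(\nu))$ corresponds under the canonical isomorphism to $(\mathbf a,\mathbf b)\mapsto\phi(a_1,\dots,a_{k-1},0,b_1,\dots,b_{n-k-1})$; $\blacktriangle=\sum_{k=0}^n\blacktriangle_k$. *)

(* Defs.v *)
From HB Require Import structures.
From mathcomp Require Import all_boot all_order all_algebra.
Set Implicit Arguments. Unset Strict Implicit. Unset Printing Implicit Defensive.
Import GRing.Theory.
Local Open Scope ring_scope.

Definition is_composition (n : nat) (a : seq nat) : bool :=
  all (fun x => 0 < x)%N a && (sumn a == n).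

(* set(alpha) = {a1, a1+a2, ..., a1+...+a_{l-1}} as a list of naturals. *)
Definition setc (a : seq nat) : seq nat :=
  [seq sumn (take k a) | k <- iota 1 (size a).-1].

Definition nconcat (a b : seq nat) : seq nat :=
  match a, b with
  | [::], _ => b
  | _, [::] => a
  | _, y :: b' => belast (head 0%N a) (behead a) ++ (last 0%N a + y)%N :: b'
  end.

Fixpoint words (l bd : nat) : seq (seq nat) :=
  match l with
  | 0 => [:: [::]]
  | l'.+1 => [::] :: [seq i :: w | i <- iota 1 bd, w <- words l' bd]
  end.

Definition compositions (m : nat) : seq (seq nat) :=
  [seq s <- words m m | sumn s == m].

(* Elements of Q_n(nu) = (C_nu)^(n-1) are sequences g : seq 'I_nu of size n.-1
   (entry g_i stored at position i-1).  Functions on Q_n(nu) with values in R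
   are functions seq 'I_nu -> R (only their values on sequences of size n.-1
   matter). *)
Definition kappa (R : nzRingType) (nu n : nat) (K : seq nat) (g : seq 'I_nu) : R :=
  if all (fun j => 0 < j < n)%N K &&
     all (fun j => (nth 0 [seq val x | x <- g] j.-1 != 0)%N == (j \in K))
         (iota 1 n.-1)
  then 1 else 0.

(* k-th component of the coproduct, as a function on Q_k(nu) x Q_(n-k)(nu)
   (canonical identification Fun(Q_k) (x) Fun(Q_(n-k)) = Fun(Q_k x Q_(n-k))). *)
Definition coprod_k (R : nzRingType) (nu n k : nat) (phi : seq 'I_nu -> R)
  (Hnu : (0 < nu)%N) (a b : seq 'I_nu) : R :=
  if k == 0%N then phi b
  else if k == n then phi a
  else phi (a ++ Ordinal Hnu :: b).

Arguments kappa R nu n K g : clear implicits.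
Arguments coprod_k R nu n k phi Hnu a b : clear implicits.

(* Main.v *)
Require Import Defs.
From HB Require Import structures.
From mathcomp Require Import all_boot all_order all_algebra.
From mathcomp Require Import zify.
Import GRing.Theory.
Local Open Scope ring_scope.

Local Open Scope nat_scope.

Lemma setc_nil : setc [::] = [::]. Proof. by []. Qed.

Lemma setc_cons x y s : setc [:: x, y & s] = x :: map (addn x) (setc (y :: s)).
Proof.
rewrite /setc /= addn0; congr (_ :: _).
rewrite -map_comp (iotaDl 1 1) -map_comp; apply: eq_map => k /=.
by [].
Qed.

Lemma setc_bound a : all (fun x => 0 < x) a -> forall j, j \in setc a -> 0 < j < sumn a.
Proof.
elim: a => [|x s IH] //; case: s IH => [|y s] IH //= /andP [x0 Hs] j.
rewrite setc_cons inE => /orP [/eqP -> | /mapP [i Hi ->]].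
  move: Hs => /= /andP [y0 _]; apply/andP; split; lia.
have /andP [i0 il] := IH Hs i Hi.
apply/andP; split; move: il => /=; lia.
Qed.

Arguments setc_bound {a}.

Lemma nconcat_cons x y a b : b != [::] -> nconcat [:: x, y & a] b = x :: nconcat (y :: a) b.
Proof. by case: b. Qed.

Lemma nconcat1 x z b : nconcat [:: x] (z :: b) = (x + z) :: b.
Proof. by []. Qed.

Lemma nconcat_s0 a : nconcat a [::] = a.
Proof. by case: a. Qed.

Lemma nconcat_ne y a z b : exists w r, nconcat (y :: a) (z :: b) = w :: r.
Proof.
rewrite /=; case: (belast y a) => [|w r] /=; by eauto.
Qed.

Lemma setc_nconcat a b : a != [::] -> b != [::] ->
  setc (nconcat a b) = setc a ++ map (addn (sumn a)) (setc b).
Proof.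
move=> a0 b0; case: b b0 => [|z b] // _; elim: a a0 => [|x a IH] // _.
case: a IH => [|y a] IH.
  rewrite nconcat1 /= addn0; clear IH; case: b => [|w b] //.
  rewrite !setc_cons /= -map_comp; congr (_ :: _).
  by apply: eq_map => i /=; rewrite addnA.
rewrite nconcat_cons //; have [w [r E]] := nconcat_ne y a z b.
have IH' := IH isT; rewrite E in IH' *.
rewrite setc_cons IH' [in RHS]setc_cons /= map_cat -map_comp.
congr (_ :: (_ ++ _)); by apply: eq_map => i /=; rewrite addnA.
Qed.

Lemma split_or g k : all (fun x => 0 < x) g -> 0 < k < sumn g ->
  k \in setc g \/ exists al be, [/\ al != [::], be != [::], all (fun x => 0 < x) al &
     all (fun x => 0 < x) be] /\ [/\ sumn al = k, sumn be = sumn g - k & nconcat al be = g].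
Proof.
elim: g k => [|x g IH] k /=; first by move=> _ /andP [] /=; lia.
move=> /andP [x0 Hg] /andP [k0 kl].
case: (ltngtP k x) => [lt|gt|eq].
- right; exists [:: k], ((x - k) :: g); split; split => //=.
  + by rewrite k0.
  + by rewrite Hg andbT subn_gt0.
  + by rewrite addn0.
  + lia.
  + by rewrite /= subnKC // ltnW.
- have : 0 < k - x < sumn g by apply/andP; split; lia.
  move/(IH _ Hg) => [H|[al [be [[al0 be0 Hal Hbe] [sa sb E]]]]].
    left; case: g Hg kl IH H => [|y g] Hg kl IH H; first by move: kl => /=; lia.
    rewrite setc_cons inE; apply/orP; right; apply/mapP; exists (k - x) => //; lia.
  right; case: al al0 Hal sa E => [|y al] // _ Hal sa E.
  exists [:: x, y & al], be; split; split => //=.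
  + by rewrite x0.
  + move: sa => /= sa; lia.
  + move: sb => /=; lia.
  + by move: E; case: (be) be0 => // ? ? _ <-.
- left; case: g Hg kl IH => [|y g] Hg kl IH; first by move: kl => /=; lia.
  by rewrite setc_cons inE eq eqxx.
Qed.

Arguments split_or {g k}.

Lemma k_notin al be : all (fun x => 0 < x) al -> all (fun x => 0 < x) be ->
  sumn al \notin setc al ++ map (addn (sumn al)) (setc be).
Proof.
move=> Hal Hbe; rewrite mem_cat negb_or; apply/andP; split.
  by apply/negP => /(setc_bound Hal) /andP [_]; rewrite ltnn.
apply/negP => /mapP [j /(setc_bound Hbe) /andP [j0 _]]; lia.
Qed.

Lemma nconcat_inj a a' b b' : a != [::] -> a' != [::] -> b != [::] -> b' != [::] ->
  all (fun x => 0 < x) a -> all (fun x => 0 < x) a' -> sumn a = sumn a' ->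
  nconcat a b = nconcat a' b' -> a = a' /\ b = b'.
Proof.
move=> a0 a'0 b0 b'0; case: b b0 => [|z b] // _; case: b' b'0 => [|z' b'] // _.
elim: a a' a0 a'0 => [|x a IH] [|x' a'] // _ _.
case: a IH => [|y a] IH; case: a' => [|y' a'].
- rewrite !nconcat1 /= !addn0 => _ _ -> [] /eqP; rewrite eqn_add2l => /eqP -> ->; by [].
- rewrite nconcat1 nconcat_cons //= => _ /and3P [_ y0 _] E [E1 _]; lia.
- rewrite nconcat1 nconcat_cons //= => /and3P [_ y0 _] _ E [E1 _]; lia.
- rewrite !nconcat_cons //= => /andP [_ Ha] /andP [_ Ha'] E [Ex Et].
  subst x'; have [-> ->] := IH (y' :: a') isT isT Ha Ha' (addnI E) Et; by [].
Qed.

Lemma mem_words l bd s :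
  (s \in words l bd) = (size s <= l) && all (fun x => 0 < x <= bd) s.
Proof.
elim: l s => [|l IH] [|x s] //=.
rewrite inE /=; apply/allpairsP/andP => [[[i w] /= [Hi Hw [-> ->]]]|[Hs /andP [Hx Ha]]].
  rewrite mem_iota in Hi; rewrite IH in Hw; move: Hw => /andP [H1 H2].
  move: Hi => /andP [Hi1 Hi2]; rewrite add1n ltnS in Hi2; by rewrite H2 Hi1 Hi2 andbT; split.
exists (x, s) => /=; split => //; first by rewrite mem_iota; lia.
by rewrite IH Ha andbT -ltnS.
Qed.

Lemma words_uniq l bd : uniq (words l bd).
Proof.
elim: l => [|l IH] //=; apply/andP; split.
  by apply/negP => /allpairsP [[i w] [_ _]].
apply: allpairs_uniq => //; first exact: iota_uniq.
by move=> [i w] [i' w'] _ _ /= [-> ->].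
Qed.

Lemma size_sumn s : all (fun x => 0 < x) s -> size s <= sumn s.
Proof. elim: s => [|x s IH] //= /andP [x0 /IH]; lia. Qed.

Lemma le_sumn s x : x \in s -> x <= sumn s.
Proof.
elim: s => [|y s IH] //=; rewrite inE => /orP [/eqP ->|/IH]; lia.
Qed.

Lemma mem_comp m s : (s \in compositions m) = is_composition m s.
Proof.
rewrite mem_filter mem_words /is_composition andbC.
case: eqP => [<-|_]; last by rewrite !andbF.
rewrite !andbT; apply/idP/idP => [/andP [_ H]|H].
  by apply: sub_all H => x /andP [].
rewrite size_sumn //=; apply/allP => x xs; rewrite (allP H x xs) le_sumn //.
Qed.

Lemma comp_uniq m : uniq (compositions m).
Proof. exact/filter_uniq/words_uniq. Qed.

Lemma comp0 s : is_composition 0 s -> s = [::].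
Proof. case: s => [|x s] //= /andP [/andP [x0 _]] /eqP E; exfalso; move: E; rewrite /=; lia. Qed.

Lemma comp_ne m s : 0 < m -> is_composition m s -> s != [::].
Proof. move=> m0; case: s => [|x s] // /andP [_ /eqP E]; by rewrite -E in m0. Qed.

Arguments comp_ne {m s}.
Arguments setc_nconcat {a b}.
Arguments nconcat_inj {a a' b b'}.
Arguments k_notin {al be}.

Lemma all_split (nu k m N : nat) (x : 'I_nu) (a b : seq 'I_nu) SA SB :
  0 < k -> 0 < m -> N = k + m -> size a = k.-1 -> size b = m.-1 -> val x = 0 ->
  all (fun j => 0 < j < k) SA -> all (fun j => 0 < j < m) SB ->
  all (fun j => (nth 0 [seq val y | y <- a ++ x :: b] j.-1 != 0) ==
                (j \in SA ++ map (addn k) SB)) (iota 1 N.-1)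
  = all (fun j => (nth 0 [seq val y | y <- a] j.-1 != 0) == (j \in SA)) (iota 1 k.-1)
    && all (fun j => (nth 0 [seq val y | y <- b] j.-1 != 0) == (j \in SB)) (iota 1 m.-1).
Proof.
move=> k0 m0 -> sa sb x0 HA HB.
have -> : (k + m).-1 = k.-1 + (m.-1).+1 by lia.
rewrite iotaD add1n (prednK k0) /=.
have -> : iota k.+1 m.-1 = map (addn k) (iota 1 m.-1) by rewrite -iotaDl addn1.
rewrite all_cat /= all_map.
have Hk : (nth 0 [seq val y | y <- a ++ x :: b] k.-1 != 0) == (k \in SA ++ map (addn k) SB) = true.
  rewrite map_cat nth_cat size_map sa ltnn subnn /= x0 /=.
  apply/eqP/esym/negbTE.
  rewrite mem_cat negb_or; apply/andP; split.
    by apply/negP => /(allP HA) /andP [_]; rewrite ltnn.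
  apply/negP => /mapP [j /(allP HB) /andP [j0 _]]; lia.
rewrite Hk /=; congr (_ && _).
  apply: eq_in_all => j; rewrite mem_iota => /andP [j1 jk].
  rewrite map_cat nth_cat size_map sa (_ : j.-1 < k.-1); last by lia.
  rewrite mem_cat (_ : j \in map (addn k) SB = false) ?orbF //.
  by apply/negP => /mapP [i _]; lia.
apply: eq_in_all => j; rewrite mem_iota => /andP [j1 jk] /=.
rewrite map_cat nth_cat size_map sa (_ : (k + j).-1 < k.-1 = false); last by lia.
rewrite (_ : (k + j).-1 - k.-1 = (j.-1).+1); last by lia.
rewrite /= mem_cat (mem_map (@addnI k)) (_ : k + j \in SA = false) //.
by apply/negP => /(allP HA) /andP [_]; lia.
Qed.

Local Open Scope ring_scope.

Lemma sum_single (R : nzRingType) (s t : seq (seq nat)) (P : seq nat -> seq nat -> bool)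
  (F : seq nat -> seq nat -> R) a0 b0 :
  uniq s -> uniq t -> a0 \in s -> b0 \in t -> P a0 b0 ->
  (forall a b, a \in s -> b \in t -> P a b -> a = a0 /\ b = b0) ->
  \sum_(a <- s) \sum_(b <- t | P a b) F a b = F a0 b0.
Proof.
move=> us ut As Bt P0 U.
rewrite (bigD1_seq a0) //=.
have -> : \sum_(a <- s | a != a0) \sum_(b <- t | P a b) F a b = 0.
  rewrite big1_seq // => a /andP [na As']; rewrite big1_seq // => b /andP [pb Bt'].
  by have [ea _] := U a b As' Bt' pb; rewrite ea eqxx in na.
rewrite addr0 big_mkcond (bigD1_seq b0) //= P0 big1_seq ?addr0 // => b /andP [nb Bt'].
case: ifP => // pb; have [_ eb] := U a0 b As Bt' pb; by rewrite eb eqxx in nb.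
Qed.

Lemma sum_none (R : nzRingType) (s t : seq (seq nat)) (P : seq nat -> seq nat -> bool)
  (F : seq nat -> seq nat -> R) :
  (forall a b, a \in s -> b \in t -> ~~ P a b) ->
  \sum_(a <- s) \sum_(b <- t | P a b) F a b = 0.
Proof.
move=> H; rewrite big1_seq // => a /andP [_ As]; rewrite big1_seq // => b /andP [pb Bt].
by move: (H a b As Bt); rewrite pb.
Qed.

Lemma kappa0 (R : nzRingType) nu (g : seq 'I_nu) : kappa R nu 0 [::] g = 1.
Proof. by []. Qed.

Theorem proposition3p17 (R : comNzRingType) (nu : nat) (Hnu : (1 < nu)%N)
  (n : nat) (gamma : seq nat) :
  is_composition n gamma ->
  forall k : nat, (k <= n)%N ->
  forall a b : seq 'I_nu, size a = k.-1 -> size b = (n - k).-1 ->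
  coprod_k R nu n k (kappa R nu n (setc gamma)) (ltnW Hnu) a b
  = \sum_(alpha <- compositions k) \sum_(beta <- compositions (n - k)
          | nconcat alpha beta == gamma)
      kappa R nu k (setc alpha) a * kappa R nu (n - k) (setc beta) b.
Proof.
move=> Hc; have /andP [Hg /eqP Hn] := Hc.
move=> k kn a b sa sb; rewrite /coprod_k.
case: (posnP k) => [k0|kpos].
  subst k; rewrite subn0.
  rewrite (@sum_single _ _ _ _ _ [::] gamma); first by rewrite setc_nil kappa0 mul1r.
  - exact: comp_uniq.
  - exact: comp_uniq.
  - by rewrite mem_comp.
  - by rewrite mem_comp.
  - by [].
  by move=> al be; rewrite !mem_comp => /comp0 -> _ /eqP <-.
case: (eqVneq k n) => [ekn|nkn].
  rewrite ekn subnn.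
  rewrite (@sum_single _ _ _ _ _ gamma [::]); first by rewrite setc_nil kappa0 mulr1.
  - exact: comp_uniq.
  - exact: comp_uniq.
  - by rewrite mem_comp.
  - by rewrite mem_comp.
  - by rewrite nconcat_s0.
  by move=> al be; rewrite !mem_comp => _ /comp0 ->; rewrite nconcat_s0 => /eqP.
have kln : (k < n)%N by rewrite ltn_neqAle nkn kn.
have kI : (0 < k < sumn gamma)%N by rewrite kpos Hn.
have [kin | [al [be [[al0 be0 Hal Hbe] [sal sbe E]]]]] := split_or Hg kI.
  have -> : kappa R nu n (setc gamma) (a ++ Ordinal (ltnW Hnu) :: b) = 0.
    rewrite /kappa; case: ifP => // /andP [_ /allP /(_ k)].
    rewrite mem_iota (_ : (1 <= k < 1 + n.-1)%N); last by apply/andP; split; lia.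
    move=> /(_ isT); rewrite map_cat nth_cat size_map sa ltnn subnn /= kin.
    by [].
  rewrite sum_none // => al be; rewrite !mem_comp => Ha Hb.
  apply/negP => /eqP E.
  have al0 := comp_ne kpos Ha.
  have be0 : be != [::] by apply: (comp_ne _ Hb); rewrite subn_gt0.
  move: Ha Hb => /andP [Hal /eqP sal] /andP [Hbe _].
  move: kin; rewrite -E setc_nconcat // -{1}sal.
  by move: (k_notin Hal Hbe) => /negP; rewrite sal.
have Hcal : is_composition k al by rewrite /is_composition Hal sal eqxx.
have Hcbe : is_composition (n - k) be by rewrite /is_composition Hbe sbe Hn eqxx.
rewrite (@sum_single _ _ _ _ _ al be); first last.
  - move=> al' be'; rewrite !mem_comp => Ha Hb /eqP E'.
    have al0' := comp_ne kpos Ha.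
    have be0' : be' != [::] by apply: (comp_ne _ Hb); rewrite subn_gt0.
    move: Ha => /andP [Hal' /eqP sal'].
    apply: (nconcat_inj al0' al0 be0' be0 Hal' Hal); first by rewrite sal' sal.
    by rewrite E E'.
  - by rewrite E.
  - by rewrite mem_comp.
  - by rewrite mem_comp.
  - exact: comp_uniq.
  - exact: comp_uniq.
have RA : all (fun j => (0 < j < k)%N) (setc al).
  by apply/allP => j /(setc_bound Hal); rewrite sal.
have RB : all (fun j => (0 < j < n - k)%N) (setc be).
  by apply/allP => j /(setc_bound Hbe); rewrite sbe Hn.
have RN : all (fun j => (0 < j < n)%N) (setc al ++ map (addn k) (setc be)).
  rewrite all_cat all_map; apply/andP; split.
    by apply: sub_all RA => j /andP [? ?]; apply/andP; split; lia.
  by apply: sub_all RB => j /andP [? ?] /=; apply/andP; split; lia.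
rewrite -E setc_nconcat // sal /kappa RA RB RN /=.
rewrite (@all_split nu k (n - k) n) //.
- by case: (all _ _); case: (all _ _); rewrite ?mulr1 ?mulr0.
- by rewrite subn_gt0.
- by rewrite subnKC.
Qed.
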